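(* Let $H\subseteq G$ be finite groups such that the interval $[H,G]$ of the subgroup lattice of $G$ is top Boolean. Then $[H,G]$ is $H$-cyclic, i.e. there exists $g\in G$ such that $\langle H,g\rangle=G$.
   Context: The interval $[H,G]$ is the lattice of subgroups $K$ with $H\subseteq K\subseteq G$, ordered by inclusion, with $K_1\vee K_2=\langle K_1,K_2\rangle$ and $K_1\wedge K_2=K_1\cap K_2$. Coatoms of a finite lattice are the maximal elements of $L\setminus\{\hat 1\}$; if $t$ is the meet of all coatoms, the top interval of $L$ is $[t,\hat 1]$. A finite lattice is top Boolean if its top interval is a Boolean lattice (distributive, bounded, every element has a unique complement). An interval $[H,G]$ is $H$-cyclic if there exists $g\in G$ with $\langle Hg\rangle=\langle H,g\rangle=G$. *)

(* Defs.v *)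
From mathcomp Require Import all_boot all_order all_fingroup.
Set Implicit Arguments. Unset Strict Implicit. Unset Printing Implicit Defensive.
Local Open Scope group_scope.

Definition interval (gT : finGroupType) (A B : {set gT}) : {set {group gT}} :=
  [set K : {group gT} | (A \subset K) && (K \subset B)].

Definition coatoms (gT : finGroupType) (H G : {set gT}) : {set {group gT}} :=
  [set K in interval H G | (K \proper G) &&
     [forall K' in interval H G, (K \subset K') ==> (K' \proper G) ==> (K' \subset K)]].

(* Meet of all coatoms (the meet of the empty family is the top element G). *)
Definition top_bottom (gT : finGroupType) (H G : {set gT}) : {set gT} :=
  G :&: \bigcap_(K in coatoms H G) (K : {set gT}).

(* The interval [A, B] is a Boolean lattice: distributive, and every element
   has a unique complement (boundedness is automatic: bottom A, top B). *)
Definition boolean_interval (gT : finGroupType) (A B : {set gT}) : Prop :=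
  (forall K1 K2 K3 : {group gT},
      K1 \in interval A B -> K2 \in interval A B -> K3 \in interval A B ->
      K1 :&: <<(K2 :|: K3)>> = <<((K1 :&: K2) :|: (K1 :&: K3))>>)
  /\
  (forall K : {group gT}, K \in interval A B ->
     exists K' : {group gT},
       [/\ K' \in interval A B, K :&: K' = A, <<(K :|: K')>> = B &
           forall K'' : {group gT}, K'' \in interval A B ->
             K :&: K'' = A -> <<(K :|: K'')>> = B -> K'' :=: K']).

Definition top_boolean (gT : finGroupType) (H G : {set gT}) : Prop :=
  boolean_interval (top_bottom H G) G.

(* Main.v *)
Require Import Defs.
From mathcomp Require Import all_boot all_order all_fingroup.
Local Open Scope group_scope.
Set Implicit Arguments. Unset Strict Implicit.

Section S.
Variables (gT : finGroupType) (H G : {group gT}).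

Lemma intervalP (A B : {set gT}) (K : {group gT}) :
  (K \in interval A B) = (A \subset K) && (K \subset B).
Proof. by rewrite inE. Qed.

Lemma coatomP (M : {group gT}) : M \in coatoms H G ->
  [/\ H \subset M, M \proper G &
     forall K : {group gT}, H \subset K -> M \subset K -> K \proper G -> K \subset M].
Proof.
rewrite inE intervalP => /andP[/andP[HM MG] /andP[pMG /forall_inP hK]].
split=> // K HK MK pKG.
have := hK K. rewrite intervalP HK (proper_sub pKG) => /(_ isT).
by rewrite MK pKG.
Qed.

Lemma join_coatoms (M N : {group gT}) : M \in coatoms H G -> N \in coatoms H G ->
  M != N -> <<M :|: N>> = G.
Proof.
move=> cM cN neMN.
have [HM pMG maxM] := coatomP cM.
have [HN pNG maxN] := coatomP cN.
have sJG : <<M :|: N>> \subset G.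
  by rewrite gen_subG subUset (proper_sub pMG) (proper_sub pNG).
case: (eqVproper sJG) => // pJG.
have sJM : (M <*> N)%G \subset M.
  apply: maxM => //; first by apply: subset_trans HM (joing_subl _ _).
  exact: joing_subl.
have sNM : N \subset M by apply: subset_trans (joing_subr _ _) sJM.
have sMN : M \subset N by apply: maxN.
case/eqP: neMN; apply: val_inj => /=; apply/eqP; rewrite eqEsubset sMN sNM.
done.
Qed.

Lemma sep_elem (M : {group gT}) : top_boolean H G -> M \in coatoms H G ->
  exists a, [/\ a \in G, a \notin M &
    forall N : {group gT}, N \in coatoms H G -> N != M -> a \in N].
Proof.
move=> [dist comp] cM.
set t := top_bottom H G.
have tN : forall N : {group gT}, N \in coatoms H G -> t \subset N.
  move=> N cN; rewrite /t /top_bottom; apply/subIset/orP; right.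
  exact: (bigcap_inf N cN).
have inI : forall N : {group gT}, N \in coatoms H G -> N \in interval t G.
  move=> N cN; rewrite intervalP tN //=.
  by have [_ /proper_sub -> _] := coatomP cN.
have [_ pMG _] := coatomP cM.
have [K' [iK' MK' JK' _]] := comp M (inI M cM).
move: (iK'); rewrite intervalP => /andP[tK' K'G].
have nsK'M : ~~ (K' \subset M).
  apply/negP => sK'M; move: pMG; rewrite -JK'.
  by rewrite (setUidPl sK'M) genGid properE subxx andbF.
have [a aK' aM] := subsetPn nsK'M.
exists a; split => //; first exact: (subsetP K'G).
move=> N cN neNM.
have := dist K' M N iK' (inI M cM) (inI N cN).
rewrite (join_coatoms cM cN); last by rewrite eq_sym.
rewrite (setIidPl K'G) setIC MK'.
have tK'N : t \subset K' :&: N by rewrite subsetI tK' tN.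
rewrite (setUidPr tK'N) genGid => eK'.
have : a \in K' :&: N by rewrite -eK'.
by rewrite inE => /andP[].
Qed.

End S.

Lemma seq_elem (gT : finGroupType) (H G : {group gT}) : top_boolean H G ->
  forall s : seq {group gT}, uniq s -> all (mem (coatoms H G)) s ->
  exists2 g, g \in G & forall N : {group gT}, N \in coatoms H G ->
     (g \in N) = (N \notin s).
Proof.
move=> tb; elim=> [|M s IH] /=.
  by move=> _ _; exists 1 => // N _; rewrite group1.
move=> /andP[Ms us] /andP[cM as_].
have [g' g'G hg'] := IH us as_.
have [a [aG aM haN]] := sep_elem tb cM.
exists (a * g'); first by rewrite groupM.
move=> N cN; rewrite in_cons.
case: (eqVneq N M) => [-> | neNM] /=.
  have g'M : g' \in M by rewrite hg'.
  by rewrite (groupMr _ g'M) (negbTE aM).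
by rewrite (groupMl _ (haN N cN neNM)) hg'.
Qed.

Theorem theorem3p2 (gT : finGroupType) (H G : {group gT}) :
  H \subset G -> top_boolean H G ->
  exists2 g : gT, g \in G & <<(H :|: [set g])>> = G.
Proof.
move=> sHG tb.
have allc : all (mem (coatoms H G)) (enum (mem (coatoms H G))).
  by apply/allP => x; rewrite mem_enum.
have [g gG hg] := seq_elem tb (enum_uniq (mem (coatoms H G))) allc.
exists g => //.
have sKG : <<H :|: [set g]>> \subset G by rewrite gen_subG subUset sHG sub1set.
case: (eqVproper sKG) => // pKG.
pose P := fun K : {group gT} => (H \subset K) && (K \proper G).
have PK : P (<<H :|: [set g]>>)%G.
  by rewrite /P pKG andbT; apply: subset_trans (subsetUl _ _) (subset_gen _).
have [M maxM sKM] := maxgroup_exists PK.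
have [/andP [HM pMG] maxM'] := maxgroupP maxM.
have cM : M \in coatoms H G.
  rewrite inE intervalP HM (proper_sub pMG) pMG /=.
  apply/forall_inP => K; rewrite intervalP => /andP[HK KG].
  apply/implyP => MK; apply/implyP => pK.
  by rewrite (maxM' K) // /P HK pK.
have : g \in M.
  apply: (subsetP sKM); apply: (subsetP (subset_gen _)).
  by rewrite inE set11 orbT.
by rewrite hg // mem_enum cM.
Qed.
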